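(* Let $A\in\mathbb{Z}^{d\times n}$, $\mathbf{b}\in\mathbb{Z}^d$, $\mathbf{c}\in\mathbb{Z}^n$, $\mathbf{u}\in\mathbb{Z}_{\ge0}^n$. In any sequence of discrete steepest-descent augmentations $\mathbf{x}_{k+1}=\mathbf{x}_k+\alpha_k\mathbf{z}_k$ ($\mathbf{z}_k\in\mathcal{G}(A)$) for the ILP $\min\{\mathbf{c}^\top\mathbf{x} : A\mathbf{x}=\mathbf{b},\ \mathbf{0}\le\mathbf{x}\le\mathbf{u},\ \mathbf{x}\in\mathbb{Z}^n\}$, the directions $\mathbf{z}_k$ are pairwise distinct. Consequently the number of discrete steepest-descent augmentations needed to reach an optimal solution is at most $|\mathcal{G}(A)|$, independently of $\mathbf{b}$, $\mathbf{c}$, $\mathbf{u}$ and the initial feasible solution.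
   Context: For $\mathbf{v},\mathbf{w}\in\mathbb{R}^n$ write $\mathbf{v}\sqsubseteq\mathbf{w}$ if $v_iw_i\ge0$ and $|v_i|\le|w_i|$ for all $i$; the Graver basis $\mathcal{G}(A)$ is the set of $\sqsubseteq$-minimal elements of $(\ker(A)\cap\mathbb{Z}^n)\setminus\{\mathbf{0}\}$. Feasible means $A\mathbf{x}=\mathbf{b}$, $\mathbf{0}\le\mathbf{x}\le\mathbf{u}$, $\mathbf{x}\in\mathbb{Z}^n$. Discrete steepest-descent augmentation (ILP): given a feasible $\mathbf{x}_k$, choose $\mathbf{z}_k\in\mathcal{G}(A)$ maximizing $-\mathbf{c}^\top\mathbf{z}/\|\mathbf{z}\|_1$ among all $\mathbf{z}\in\mathcal{G}(A)$ with $\mathbf{x}_k+\mathbf{z}$ feasible; if this maximum is positive, let $\alpha_k$ be the largest integer with $\mathbf{x}_k+\alpha_k\mathbf{z}_k$ feasible and set $\mathbf{x}_{k+1}:=\mathbf{x}_k+\alpha_k\mathbf{z}_k$, otherwise stop. *)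

(* Defs.v *)
From HB Require Import structures.
From mathcomp Require Import all_boot all_order all_algebra.
Set Implicit Arguments. Unset Strict Implicit. Unset Printing Implicit Defensive.
Import Order.TTheory GRing.Theory Num.Theory.
Local Open Scope ring_scope.

Section GraverDefs.
Variables (d n : nat).

Definition conformal (v w : 'cV[int]_n) : Prop :=
  forall i : 'I_n, 0 <= v i 0 * w i 0 /\ `|v i 0| <= `|w i 0|.

Definition graver (A : 'M[int]_(d, n)) (z : 'cV[int]_n) : Prop :=
  A *m z = 0 /\ z != 0 /\
  (forall v : 'cV[int]_n, A *m v = 0 -> v != 0 -> conformal v z -> v = z).

Definition feasible (A : 'M[int]_(d, n)) (b : 'cV[int]_d) (u : 'cV[int]_n)
  (x : 'cV[int]_n) : Prop :=
  A *m x = b /\ (forall i : 'I_n, 0 <= x i 0 <= u i 0).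

Definition cost (c x : 'cV[int]_n) : int := \sum_(i < n) c i 0 * x i 0.

Definition norm1 (z : 'cV[int]_n) : int := \sum_(i < n) `|z i 0|.

Definition sd_ratio (c z : 'cV[int]_n) : rat :=
  - ((cost c z)%:~R) / ((norm1 z)%:~R).

Definition sd_step (A : 'M[int]_(d, n)) (b : 'cV[int]_d) (u c : 'cV[int]_n)
  (x z : 'cV[int]_n) (alpha : int) (x' : 'cV[int]_n) : Prop :=
  feasible A b u x /\
  [/\ graver A z /\ feasible A b u (x + z),
      (forall z' : 'cV[int]_n, graver A z' -> feasible A b u (x + z') ->
          sd_ratio c z' <= sd_ratio c z),
      0 < sd_ratio c z,
      feasible A b u (x + alpha *: z) /\
      (forall a : int, feasible A b u (x + a *: z) -> a <= alpha)
    & x' = x + alpha *: z].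

Definition sd_stopped (A : 'M[int]_(d, n)) (b : 'cV[int]_d) (u c : 'cV[int]_n)
  (x : 'cV[int]_n) : Prop :=
  forall z : 'cV[int]_n, graver A z -> feasible A b u (x + z) -> sd_ratio c z <= 0.

Definition optimal (A : 'M[int]_(d, n)) (b : 'cV[int]_d) (u c : 'cV[int]_n)
  (x : 'cV[int]_n) : Prop :=
  feasible A b u x /\ (forall y : 'cV[int]_n, feasible A b u y -> cost c x <= cost c y).

End GraverDefs.

(* Main.v *)
Require Import Defs.
From HB Require Import structures.
From mathcomp Require Import all_boot all_order all_algebra.
From mathcomp Require Import zify.
From mathcomp Require Import ring lra.
From Stdlib Require Import Classical ClassicalEpsilon.
Set Implicit Arguments. Unset Strict Implicit. Unset Printing Implicit Defensive.

Lemma min_exists (g : nat -> nat) s :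
  exists p, s <= p /\ forall q, s <= q -> g p <= g q.
Proof.
suff H : forall v p, s <= p -> g p <= v -> exists p, s <= p /\ forall q, s <= q -> g p <= g q.
  exact: (H (g s) s).
elim=> [|v IH] p sp gp.
  exists p; split => // q _; lia.
case: (classic (forall q, s <= q -> g p <= g q)) => Hc; first by exists p.
have [q [sq lt]] : exists q, s <= q /\ g q < g p.
  apply: NNPP => HN; apply: Hc => q sq; rewrite leqNgt; apply/negP => lt; apply: HN; by exists q.
apply: (IH q sq); lia.
Qed.

Lemma mono_sub (g : nat -> nat) :
  exists psi : nat -> nat, (forall a b, a < b -> psi a < psi b) /\
    (forall a b, a <= b -> g (psi a) <= g (psi b)).
Proof.
pose m s := proj1_sig (constructive_indefinite_description _ (min_exists g s)).
have Hm s : s <= m s /\ forall q, s <= q -> g (m s) <= g q.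
  exact: (proj2_sig (constructive_indefinite_description _ (min_exists g s))).
pose psi := fix psi a := if a is a'.+1 then m (psi a').+1 else m 0.
have Hs a : psi a < psi a.+1 by case: (Hm (psi a).+1).
have Hr a : exists s, s <= psi a /\ psi a = m s.
  case: a => [|a]; first by exists 0.
  exists (psi a).+1; split => //; by case: (Hm (psi a).+1).
have Hst : forall a b, a < b -> psi a < psi b.
  move=> a b; apply: (@homo_ltn _ psi (fun x y => x < y)) => //; exact: ltn_trans.
exists psi; split => //.
move=> a0 b0; apply: (@homo_leq _ (fun t => g (psi t)) (fun x y => x <= y)) => //; [exact: leq_trans| move=> a].
have [s [sa ->]] := Hr a; case: (Hm s) => _; apply; have := Hs a; lia.
Qed.

Lemma dickson (I : eqType) T (key : I -> T -> nat) (cs : seq I) (f : nat -> T) :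
  exists psi : nat -> nat, (forall a b, a < b -> psi a < psi b) /\
    forall i, i \in cs -> forall a b, a <= b -> key i (f (psi a)) <= key i (f (psi b)).
Proof.
elim: cs => [|c cs [psi1 [S1 M1]]]; first by exists id.
have [psi2 [S2 M2]] := mono_sub (fun t => key c (f (psi1 t))).
exists (fun t => psi1 (psi2 t)); split; first by move=> a b /S2 /S1.
move=> i; rewrite in_cons => /orP [/eqP -> | Hi] a b ab; first exact: M2.
apply: M1 => //; move: ab; rewrite leq_eqVlt => /orP [/eqP -> // | /S2]; exact: ltnW.
Qed.

Import Order.TTheory GRing.Theory Num.Theory.
Local Open Scope ring_scope.

Lemma i_trans (a b c : int) : 0 <= a * b -> `|a| <= `|b| -> 0 <= b * c -> `|b| <= `|c| -> 0 <= a * c /\ `|a| <= `|c|.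
Proof. nia. Qed.
Lemma i_sub (a b : int) : 0 <= a * b -> `|a| <= `|b| -> 0 <= (b - a) * b /\ `|b - a| <= `|b|.
Proof. nia. Qed.
Lemma i_norm (a b : int) : 0 <= a * b -> `|a| <= `|b| -> `|b| = `|a| + `|b - a|.
Proof. nia. Qed.
Lemma i_strict (a b : int) : 0 <= a * b -> `|a| <= `|b| -> a != b -> `|a| < `|b|.
Proof. move=> ? ? /eqP; nia. Qed.
Lemma i_feas (x u a b : int) : 0 <= x <= u -> 0 <= x + b <= u -> 0 <= a * b -> `|a| <= `|b| -> 0 <= x + a <= u.
Proof. nia. Qed.
Lemma i_tri (a b : int) : `|a| + `|b| <= `|a + b| -> 0 <= a * (a+b) /\ `|a| <= `|a+b|.
Proof. nia. Qed.

Definition ipos (a : int) : nat := if 0 <= a then `|a|%N else 0%N.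
Definition ineg (a : int) : nat := if a < 0 then `|a|%N else 0%N.
Lemma i_key (a b : int) : (ipos a <= ipos b)%N -> (ineg a <= ineg b)%N -> 0 <= a * b /\ `|a| <= `|b|.
Proof. rewrite /ipos /ineg; case: ifP; case: ifP; case: ifP; case: ifP; lia. Qed.

Lemma mono_alg (r r' a N N' W : rat) : 0 < r -> 0 < N' -> 0 <= a ->
  a*(r*N) + r'*N' <= r*W -> W <= a*N + N' -> r' <= r.
Proof. move=> *; nra. Qed.
Lemma q_alg (r rm a NQ CQ N W : rat): 0 < r -> r <= rm -> 0 <= a -> 0 <= N -> r*NQ <= CQ -> W <= NQ + a*N -> r*W <= CQ + a*(rm*N).
Proof.
move=> r0 rr a0 N0 h1 h2.
have h3 : r * W <= r * (NQ + a*N) by rewrite ler_wpM2l // ltW.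
have h4 : 0 <= (a * N) * (rm - r) by rewrite mulr_ge0 ?mulr_ge0 // subr_ge0.
nra.
Qed.
Lemma fin_alg (r a N CQ NQ Cv Nv NP: rat): 0<r -> Cv = a*(r*N) + CQ -> r*NQ <= CQ -> Cv <= r*Nv -> NP = a*N -> NP + NQ <= Nv.
Proof.
move=> r0 e1 h1 h2 e2.
have : r * (NP + NQ) <= r * Nv by rewrite e2; nra.
by rewrite ler_pM2l.
Qed.

Section V.
Variables (d n : nat) (A : 'M[int]_(d, n)).
Implicit Types (v w g h x : 'cV[int]_n).

Lemma costD c v w : cost c (v + w) = cost c v + cost c w.
Proof. rewrite /cost -big_split; apply: eq_bigr => i _; by rewrite mxE mulrDr. Qed.
Lemma costB c v w : cost c (v - w) = cost c v - cost c w.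
Proof. rewrite /cost -sumrB; apply: eq_bigr => i _; by rewrite !mxE mulrDr mulrN. Qed.
Lemma costZ c a v : cost c (a *: v) = a * cost c v.
Proof. rewrite /cost mulr_sumr; apply: eq_bigr => i _; by rewrite mxE mulrCA. Qed.
Lemma norm1_ge0 v : 0 <= norm1 v.
Proof. by apply: sumr_ge0 => i _. Qed.
Lemma norm1D v w : norm1 (v + w) <= norm1 v + norm1 w.
Proof. rewrite /norm1 -big_split; apply: ler_sum => i _; by rewrite mxE ler_normD. Qed.
Lemma norm1Z a v : norm1 (a *: v) = `|a| * norm1 v.
Proof. rewrite /norm1 mulr_sumr; apply: eq_bigr => i _; by rewrite mxE normrM. Qed.
Lemma norm1_gt0 v : v != 0 -> 0 < norm1 v.
Proof.
move=> nz; rewrite lt_def norm1_ge0 andbT; apply: contra nz => /eqP H.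
apply/eqP/matrixP => i j; rewrite ord1 mxE.
have : `|v i 0| = 0.
  apply/eqP; rewrite eq_le normr_ge0 andbT -H /norm1 (bigD1 i) //= lerDl.
  by apply: sumr_ge0.
by move/eqP; rewrite normr_eq0 => /eqP.
Qed.

Lemma cost0 (c : 'cV[int]_n) : cost c 0 = 0.
Proof. by rewrite /cost big1 // => i _; rewrite mxE mulr0. Qed.
Lemma norm10 : norm1 (0 : 'cV[int]_n) = 0.
Proof. by rewrite /norm1 big1 // => i _; rewrite mxE normr0. Qed.

Lemma conf_refl v : conformal v v.
Proof. move=> i; split; [nia | by []]. Qed.
Lemma conf_trans v w h : conformal v w -> conformal w h -> conformal v h.
Proof. move=> H1 H2 i; case: (H1 i) => h1 h2; case: (H2 i) => h3 h4; exact: (i_trans h1 h2 h3 h4). Qed.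
Lemma conf_sub g w : conformal g w -> conformal (w - g) w.
Proof. move=> H i; case: (H i) => ? ?; rewrite !mxE; exact: i_sub. Qed.
Lemma norm1_conf g w : conformal g w -> norm1 w = norm1 g + norm1 (w - g).
Proof.
move=> H; rewrite /norm1 -big_split; apply: eq_bigr => i _; case: (H i) => ? ?.
rewrite !mxE; exact: i_norm.
Qed.
Lemma conf_strict v w : conformal v w -> v != w -> norm1 v < norm1 w.
Proof.
move=> H ne.
have [i Hi] : exists i, v i 0 != w i 0.
  apply: NNPP => HN; move/eqP: ne; apply; apply/matrixP => i j; rewrite ord1.
  apply/eqP; apply/negPn/negP => Hn; apply: HN; by exists i.
rewrite /norm1 (bigD1 i) //= [X in _ < X](bigD1 i) //=.
apply: ltr_leD; first by case: (H i) => ? ?; exact: i_strict.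
by apply: ler_sum => j _; case: (H j).
Qed.

Lemma feas_conf b u x w h : feasible A b u x -> feasible A b u (x + w) ->
  A *m h = 0 -> conformal h w -> feasible A b u (x + h).
Proof.
move=> [Ax Bx] [_ Bw] Ah C; split; first by rewrite mulmxDr Ax Ah addr0.
move=> i; case: (C i) => c1 c2; move: (Bx i) (Bw i); rewrite !mxE => h1 h2; exact: (i_feas h1 h2 c1 c2).
Qed.

Lemma graver_below m w : norm1 w <= m%:Z -> A *m w = 0 -> w != 0 ->
  exists g, graver A g /\ conformal g w.
Proof.
elim: m w => [|m IH] w Hm Aw nz.
  by move: (norm1_gt0 nz); rewrite ltNge Hm.
case: (classic (graver A w)) => Hg; first by exists w; split => //; exact: conf_refl.
have [v [Av [nv [Cv ne]]]] : exists v, A *m v = 0 /\ v != 0 /\ conformal v w /\ v != w.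
  apply: NNPP => HN; apply: Hg; split => //; split => // v Av nv Cv.
  apply/eqP; apply/negPn/negP => ne; apply: HN; by exists v.
have lt := conf_strict Cv ne.
have hv : norm1 v <= m%:Z.
  have : norm1 v < m.+1%:Z by apply: lt_le_trans Hm.
  by rewrite -addn1 PoszD ltzD1.
have [g [Gg Cg]] := IH v hv Av nv.
exists g; split => //; exact: conf_trans Cg Cv.
Qed.

Lemma Lbound (b : 'cV[int]_d) (u c : 'cV[int]_n) (r : rat) x :
  feasible A b u x ->
  (forall g, graver A g -> feasible A b u (x + g) ->
     - ((cost c g)%:~R : rat) <= r * (norm1 g)%:~R) ->
  forall w, A *m w = 0 -> feasible A b u (x + w) ->
     - ((cost c w)%:~R : rat) <= r * (norm1 w)%:~R.
Proof.
move=> Fx Hg w.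
have [m Hm] : exists m : nat, norm1 w <= m%:Z.
  exists `|norm1 w|%N; by rewrite gez0_abs ?norm1_ge0.
elim: m w Hm => [|m IH] w Hm Aw Fw.
  have -> : w = 0.
    apply/eqP; apply/negPn/negP => nz; by move: (norm1_gt0 nz); rewrite ltNge Hm.
  by rewrite cost0 norm10 mulr0 oppr0.
case: (eqVneq w 0) => [->|nz].
  by rewrite cost0 norm10 mulr0 oppr0.
have [g [Gg Cg]] := graver_below Hm Aw nz.
case: Gg => Ag [gnz gmin].
have Fg : feasible A b u (x + g) by apply: feas_conf Fx Fw Ag Cg.
have Aw' : A *m (w - g) = 0 by rewrite mulmxBr Aw Ag subrr.
have Fw' : feasible A b u (x + (w - g)) by apply: feas_conf Fx Fw Aw' (conf_sub Cg).
have Nw := norm1_conf Cg.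
have Hm' : norm1 (w - g) <= m%:Z.
  have := norm1_gt0 gnz; move: Hm; rewrite Nw; move: (norm1 g) (norm1 (w - g)) => a1 a2; lia.
have H1 := IH _ Hm' Aw' Fw'.
have H2 := Hg g (conj Ag (conj gnz gmin)) Fg.
have Cw : cost c w = cost c g + cost c (w - g) by rewrite -costD addrC subrK.
rewrite Cw Nw !intrD opprD mulrDr; exact: lerD.
Qed.

Lemma norm1_tri (P Q : 'cV[int]_n) : norm1 P + norm1 Q <= norm1 (P + Q) -> conformal P (P + Q).
Proof.
move=> H i; have := @i_tri (P i 0) (Q i 0); rewrite !mxE; apply.
rewrite leNgt; apply/negP => lt; move: H; apply/negP; rewrite -ltNge.
rewrite /norm1 -big_split /= (bigD1 i) //= [X in _ < X](bigD1 i) //=.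
rewrite !mxE; apply: ltr_leD => //; apply: ler_sum => l _; rewrite mxE; exact: ler_normD.
Qed.

Lemma ratio_eq (c : 'cV[int]_n) z : z != 0 ->
  - ((cost c z)%:~R : rat) = sd_ratio c z * (norm1 z)%:~R.
Proof.
move=> nz; rewrite /sd_ratio divfK //; rewrite intr_eq0; have := norm1_gt0 nz.
by rewrite lt_def => /andP [].
Qed.

Lemma ratio_le (c : 'cV[int]_n) z r : z != 0 ->
  (sd_ratio c z <= r) = (- ((cost c z)%:~R : rat) <= r * (norm1 z)%:~R).
Proof. move=> nz; by rewrite /sd_ratio ler_pdivrMr // ltr0z norm1_gt0. Qed.

Lemma graver_fin : exists s : seq 'cV[int]_n, forall v, v \in s <-> graver A v.
Proof.
apply: NNPP => HN.
have H : forall s : seq 'cV[int]_n, exists v,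
    (forall w, w \in s -> graver A w) -> graver A v /\ v \notin s.
  move=> s; case: (classic (forall w, w \in s -> graver A w)) => Hs; last first.
    by exists 0 => /Hs.
  apply: NNPP => H2; apply: HN; exists s => v; split; first exact: Hs.
  move=> Gv; apply/negPn/negP => nv; apply: H2; exists v => _; by split.
pose h s := proj1_sig (constructive_indefinite_description _ (H s)).
have Hh s : (forall w, w \in s -> graver A w) -> graver A (h s) /\ h s \notin s.
  exact: (proj2_sig (constructive_indefinite_description _ (H s))).
pose S := fix S t := if t is t'.+1 then h (S t') :: S t' else [::].
have SG t : forall w, w \in S t -> graver A w.
  elim: t => [|t IH] w //=; rewrite in_cons => /orP [/eqP -> | /IH //].
  by case: (Hh _ IH).
have Smem a b : (a < b)%N -> h (S a) \in S b.
  elim: b => [|b IH] //; rewrite ltnS leq_eqVlt => /orP [/eqP -> | /IH] /=;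
    rewrite in_cons ?eqxx // => ->; by rewrite orbT.
pose key (p : 'I_n * bool) (g : 'cV[int]_n) :=
  if p.2 then ipos (g p.1 0) else ineg (g p.1 0).
have [psi [Sp Mp]] := dickson key (enum {: 'I_n * bool}) (fun t => h (S t)).
have lt01 : (psi 0 < psi 1)%N by apply: Sp.
have mem := Smem _ _ lt01.
have [Gb nb] := Hh _ (SG (psi 1)).
have Ga := SG _ _ mem.
have C : conformal (h (S (psi 0))) (h (S (psi 1))).
  move=> i; apply: i_key.
    by have := Mp (i, true) (mem_enum _ _) 0%N 1%N isT.
  by have := Mp (i, false) (mem_enum _ _) 0%N 1%N isT.
case: Gb => _ [_ Hmin]; case: Ga => Aa [nza _].
have E := Hmin _ Aa nza C.
by move: nb; rewrite -E mem.
Qed.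
End V.

Theorem corollary7 (d n : nat) (A : 'M[int]_(d, n)) (b : 'cV[int]_d)
  (c u : 'cV[int]_n) (hu : forall i : 'I_n, 0 <= u i 0)
  (N : nat) (x z : nat -> 'cV[int]_n) (alpha : nat -> int)
  (hx0 : feasible A b u (x 0%N))
  (hstep : forall k : nat, (k < N)%N ->
     sd_step A b u c (x k) (z k) (alpha k) (x k.+1)) :
  (forall j k : nat, (j < N)%N -> (k < N)%N -> z j = z k -> j = k) /\
  (exists g : seq 'cV[int]_n,
     [/\ uniq g, (forall v : 'cV[int]_n, v \in g <-> graver A v) & (N <= size g)%N]) /\
  (sd_stopped A b u c (x N) -> optimal A b u c (x N)).
Proof.
pose C (v : 'cV[int]_n) : rat := - ((cost c v)%:~R).
pose Nm (v : 'cV[int]_n) : rat := (norm1 v)%:~R.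
pose r k := sd_ratio c (z k).
have Fx : forall k, (k <= N)%N -> feasible A b u (x k).
  case=> [|k] hk //; have [_ [_ _ _ [Fa _] ->]] := hstep k hk; exact: Fa.
have Gz : forall k, (k < N)%N -> graver A (z k).
  by move=> k hk; have [_ [[G _] _ _ _ _]] := hstep k hk.
have Al : forall k, (k < N)%N -> 1 <= alpha k.
  move=> k hk; have [_ [[_ F1] _ _ [_ Am] _]] := hstep k hk; apply: Am.
  by rewrite scale1r.
have rpos : forall k, (k < N)%N -> 0 < r k.
  by move=> k hk; have [_ [_ _ P _ _]] := hstep k hk.
have Ceq : forall k, (k < N)%N -> C (z k) = r k * Nm (z k).
  move=> k hk; case: (Gz k hk) => _ [nz _]; exact: ratio_eq.
have Nz : forall k, (k < N)%N -> 0 < Nm (z k).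
  move=> k hk; case: (Gz k hk) => _ [nz _]; by rewrite /Nm ltr0z norm1_gt0.
have L : forall k, (k < N)%N -> forall w, A *m w = 0 -> feasible A b u (x k + w) ->
    C w <= r k * Nm w.
  move=> k hk; apply: Lbound; first exact: Fx (ltnW hk).
  move=> g Gg Fg; have [_ [_ Hmax _ _ _]] := hstep k hk.
  case: (Gg) => _ [nz _]; rewrite -ratio_le //; exact: Hmax.
have CZ : forall a v, C (a *: v) = a%:~R * C v.
  by move=> a v; rewrite /C costZ intrM mulrN.
have CD : forall v w, C (v + w) = C v + C w.
  by move=> v w; rewrite /C costD intrD opprD.
have Mono : forall k, (k.+1 < N)%N -> r k.+1 <= r k.
  move=> k hk; have hk' : (k < N)%N by apply: ltn_trans hk.
  pose w := alpha k *: z k + z k.+1.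
  have Aw : A *m w = 0.
    rewrite mulmxDr -scalemxAr; case: (Gz _ hk) => -> _; case: (Gz _ hk') => -> _.
    by rewrite scaler0 addr0.
  have Fw : feasible A b u (x k + w).
    have [_ [[_ F1] _ _ _ _]] := hstep _ hk; have [_ [_ _ _ _ E]] := hstep _ hk'.
    by rewrite /w addrA -E.
  have H := L k hk' w Aw Fw.
  have HN : Nm w <= (alpha k)%:~R * Nm (z k) + Nm (z k.+1).
    rewrite /Nm -intrM -intrD ler_int; apply: le_trans (norm1D _ _) _.
    by rewrite norm1Z ger0_norm // (le_trans _ (Al _ hk')).
  apply: (mono_alg (rpos _ hk') (Nz _ hk) _ _ HN); first by rewrite ler0z (le_trans _ (Al _ hk')).
  by rewrite -(Ceq _ hk') -(Ceq _ hk) -CZ -CD.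
have Monoc : forall m t, (m + t < N)%N -> r (m + t)%N <= r m.
  move=> m; elim=> [|t IH] h; first by rewrite addn0.
  have h1 : ((m + t).+1 < N)%N by rewrite -addnS.
  have h2 : (m + t < N)%N by apply: ltn_trans h1.
  rewrite addnS; exact: le_trans (Mono _ h1) (IH h2).
have Dist : forall j k, (j < k)%N -> (k < N)%N -> z j <> z k.
  move=> j k jk kN Ez.
  have jN : (j < N)%N by apply: ltn_trans kN.
  have rjk : r k = r j by rewrite /r Ez.
  have rge : forall m, (j <= m)%N -> (m <= k)%N -> r j <= r m.
    move=> m jm mk; rewrite -rjk -(subnKC mk); apply: Monoc; by rewrite subnKC.
  pose Q t := x (j.+1 + t)%N - x j.+1.
  have HQ : forall t, (j.+1 + t <= k)%N -> r j * Nm (Q t) <= C (Q t).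
    elim=> [|t IH] ht.
      by rewrite /Q addn0 subrr /Nm /C norm10 cost0 mulr0 oppr0.
    have ht' : (j.+1 + t < k)%N by rewrite addnS in ht.
    have mN : (j.+1 + t < N)%N by apply: ltn_trans kN.
    have EQ : Q t.+1 = Q t + alpha (j.+1 + t)%N *: z (j.+1 + t)%N.
      have [_ [_ _ _ _ E]] := hstep _ mN; rewrite /Q addnS E.
      apply/matrixP => i l; rewrite !mxE; ring.
    rewrite EQ CD CZ Ceq //.
    apply: (q_alg (rpos _ jN) (rge _ _ _) _ _ (IH (ltnW ht'))).
    - lia.
    - exact: ltnW.
    - by rewrite ler0z (le_trans _ (Al _ mN)).
    - by rewrite /Nm ler0z norm1_ge0.
    rewrite /Nm -intrM -intrD ler_int; apply: le_trans (norm1D _ _) _.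
    by rewrite norm1Z ger0_norm // (le_trans _ (Al _ mN)).
  pose P := (alpha j + 1) *: z j.
  pose t := (k - j.+1)%N.
  have ek : (j.+1 + t)%N = k by rewrite subnKC.
  have v_eq : x j + (P + Q t) = x k + z k.
    have [_ [_ _ _ _ E]] := hstep _ jN; rewrite /Q ek E -Ez /P.
    apply/matrixP => i l; rewrite !mxE; ring.
  have AP : A *m P = 0 by rewrite /P -scalemxAr; case: (Gz _ jN) => -> _; rewrite scaler0.
  have AQ : A *m Q t = 0.
    rewrite /Q ek mulmxBr; case: (Fx _ (ltnW kN)) => -> _.
    by case: (Fx j.+1 jN) => -> _; rewrite subrr.
  have Av : A *m (P + Q t) = 0 by rewrite mulmxDr AP AQ addr0.
  have Fv : feasible A b u (x j + (P + Q t)).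
    by rewrite v_eq; have [_ [[_ F1] _ _ _ _]] := hstep _ kN.
  have Hv := L j jN _ Av Fv.
  have Hle : norm1 P + norm1 (Q t) <= norm1 (P + Q t).
    rewrite -(ler_int rat) intrD.
    apply: (fin_alg (rpos _ jN) _ (HQ t _) Hv).
    - by rewrite CD /P CZ Ceq.
    - by rewrite ek.
    rewrite /P norm1Z ger0_norm ?intrM //.
    have := Al _ jN; lia.
  have Fp : feasible A b u (x j + P) := feas_conf (Fx _ (ltnW jN)) Fv AP (norm1_tri Hle).
  have [_ [_ _ _ [_ Am] _]] := hstep _ jN.
  by have := Am _ Fp; lia.
have Inj : forall j k, (j < N)%N -> (k < N)%N -> z j = z k -> j = k.
  move=> j k jN kN E; case: (ltngtP j k) => // h.
  - by case: (Dist _ _ h kN E).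
  - by case: (Dist _ _ h jN (esym E)).
split => //; split.
  have [s Hs] := graver_fin A; exists (undup s); split.
  - exact: undup_uniq.
  - by move=> v; rewrite mem_undup.
  have -> : N = size (map z (iota 0 N)) by rewrite size_map size_iota.
  apply: uniq_leq_size.
    rewrite map_inj_in_uniq ?iota_uniq // => j k; rewrite !mem_iota /= !add0n.
    exact: Inj.
  move=> v /mapP [k]; rewrite mem_iota add0n /= => kN ->; rewrite mem_undup.
  by apply/Hs; exact: Gz.
move=> St; have FN := Fx N (leqnn N); split => // y Fy.
have Aw : A *m (y - x N) = 0 by rewrite mulmxBr; case: Fy => -> _; case: FN => -> _; rewrite subrr.
have Fw : feasible A b u (x N + (y - x N)) by rewrite addrC subrK.
have H := Lbound (r := 0) FN _ Aw Fw.
have : C (y - x N) <= 0.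
  rewrite -(mul0r (Nm (y - x N))); apply: H => g Gg Fg.
  case: (Gg) => _ [nz _]; rewrite -ratio_le //; exact: St.
rewrite /C oppr_le0 ler0z costB subr_ge0 //.
Qed.
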